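(* Let $(\mathcal A,\mathcal H,D)_\sigma$ be a twisted spectral triple and $e\in M_q(\mathcal A)$ an idempotent with $\sigma(e)=e^*$. Let $\mathcal E=e\mathcal A^q$ with its canonical $\sigma$-translation $\mathcal E^\sigma=\sigma(e)\mathcal A^q$, $\sigma^{\mathcal E}((\xi_j))=(\sigma(\xi_j))$, let $(\cdot,\cdot)_{\mathcal E}$ be a Hermitian metric on $\mathcal E$, and let $\mathfrak s:\mathcal E^\sigma\to\mathcal E$ be the unique $\mathcal A$-linear isomorphism with $(\mathfrak s\eta,\xi)_{\mathcal E}=(\eta,\xi)_0$ for all $\eta\in\mathcal E^\sigma,\xi\in\mathcal E$. Then $\{(\cdot,\cdot)_{\mathcal E},\mathfrak s\}$ is a $\sigma$-Hermitian structure on $\mathcal E$, and the Grassmannian $\sigma$-connection $\nabla_0^{\mathcal E}\xi=\sigma(e)\big(d_\sigma\xi_j\big)_{j=1}^q$ is a $\sigma$-Hermitian $\sigma$-connection on $\mathcal E$.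
   Context: Twisted spectral triple: $\mathbb Z_2$-graded $\mathcal H$, unital involutive algebra $\mathcal A$ closed under holomorphic functional calculus acting by even bounded operators, automorphism $\sigma$ with $\sigma(a)^*=\sigma^{-1}(a^* )$, odd selfadjoint $D$ with compact resolvent, $a(\mathrm{dom}D)\subset\mathrm{dom}D$ and $[D,a]_\sigma=Da-\sigma(a)D$ bounded. $(\xi,\eta)_0=\sum_j\xi_j^*\eta_j$ is the canonical metric on $\mathcal A^q$. $\Omega^1_{D,\sigma}(\mathcal A)=\mathrm{span}\{a[D,b]_\sigma\}$, $d_\sigma a=[D,a]_\sigma$; $\sigma(e)\mathcal A^q\otimes_{\mathcal A}\Omega^1_{D,\sigma}(\mathcal A)$ is identified with $\sigma(e)\Omega^1_{D,\sigma}(\mathcal A)^q$. A $\sigma$-connection is a $\mathbb C$-linear $\nabla:\mathcal E\to\mathcal E^\sigma\otimes_{\mathcal A}\Omega^1_{D,\sigma}(\mathcal A)$ with $\nabla(\xi a)=(\nabla\xi)a+\sigma^{\mathcal E}(\xi)\otimes d_\sigma a$. A Hermitian metric is $(\cdot,\cdot):\mathcal E\times\mathcal E\to\mathcal A$ with $(\xi a,\eta b)=a^*(\xi,\eta)b$, biadditive, positive, nondegenerate. A $\sigma$-Hermitian structure is a Hermitian metric with a right-module isomorphism $\mathfrak s:\mathcal E^\sigma\to\mathcal E$ such that $(\xi_1,\mathfrak s\sigma^{\mathcal E}(\xi_2))=\sigma((\mathfrak s\sigma^{\mathcal E}(\xi_1),\xi_2))$. A $\sigma$-connection is $\sigma$-Hermitian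 if for all $\xi,\eta\in\mathcal E$, writing $\nabla\xi=\sum\xi_\alpha\otimes\omega_\alpha$, $\nabla\eta=\sum\eta_\beta\otimes\psi_\beta$, $\sum_\beta(\xi,\mathfrak s\eta_\beta)\psi_\beta-\sum_\alpha\omega_\alpha^*(\mathfrak s\xi_\alpha,\eta)=d_\sigma\big((\mathfrak s\sigma^{\mathcal E}(\xi),\eta)\big)$. *)

(* Defs.v *)
From HB Require Import structures.
From mathcomp Require Import all_boot all_order all_algebra.
Set Implicit Arguments. Unset Strict Implicit. Unset Printing Implicit Defensive.
Import Order.TTheory GRing.Theory Num.Theory.
Local Open Scope ring_scope.

Section TwistedSpectralTriple.
Variable C : numClosedFieldType.   (* stand-in for the complex numbers *)

Record is_involution (A : algType C) (st : A -> A) : Prop := {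
  inv_invol : involutive st;
  inv_add : forall x y, st (x + y) = st x + st y;
  inv_mul : forall x y, st (x * y) = st y * st x;
  inv_scale : forall (k : C) x, st (k *: x) = k^* *: st x }.

Definition positive (B : algType C) (stB : B -> B) (b : B) : Prop :=
  exists s : seq B, b = \sum_(c <- s) stB c * c.

Variables (A B : algType C).
(* A: the involutive algebra; B: bounded operators on H, with adjoint stB;
   pi: the (faithful) representation of A on H; d: a |-> [D,a]_sigma. *)
Variables (stA : A -> A) (stB : B -> B) (pi : A -> B).
Variables (sigma sigma_inv : A -> A) (d : A -> B).

(* The algebraic data induced by a twisted spectral triple (A,H,D)_sigma. *)
Record twisted_calculus : Prop := {
  tc_stA : is_involution stA;
  tc_stB : is_involution stB;
  tc_pi_inj : injective pi;
  tc_pi1 : pi 1 = 1;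
  tc_piD : forall x y, pi (x + y) = pi x + pi y;
  tc_piM : forall x y, pi (x * y) = pi x * pi y;
  tc_piZ : forall (k : C) x, pi (k *: x) = k *: pi x;
  tc_pi_star : forall x, pi (stA x) = stB (pi x);
  tc_sigmaK : cancel sigma sigma_inv;
  tc_sigma_invK : cancel sigma_inv sigma;
  tc_sigma1 : sigma 1 = 1;
  tc_sigmaD : forall x y, sigma (x + y) = sigma x + sigma y;
  tc_sigmaM : forall x y, sigma (x * y) = sigma x * sigma y;
  tc_sigmaZ : forall (k : C) x, sigma (k *: x) = k *: sigma x;
  tc_sigma_star : forall a, stA (sigma a) = sigma_inv (stA a);
  (* d a = [D,a]_sigma = D a - sigma(a) D (bounded) *)
  tc_dD : forall a b, d (a + b) = d a + d b;
  tc_dZ : forall (k : C) a, d (k *: a) = k *: d a;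
  tc_dM : forall a b, d (a * b) = d a * pi b + pi (sigma a) * d b;
  (* consequence of D selfadjoint: adjoint of [D,a]_sigma is - [D, sigma^-1(a^star)]_sigma *)
  tc_d_star : forall a, stB (d a) = - (d (sigma_inv (stA a))) }.

Definition Omega1 (w : B) : Prop :=
  exists s : seq (A * A), w = \sum_(p <- s) pi p.1 * d p.2.

Variable q : nat.
Variable e : 'M[A]_q.

Definition sigma_mx (m : 'M[A]_q) : 'M[A]_q := map_mx sigma m.
Definition star_mx (m : 'M[A]_q) : 'M[A]_q := (map_mx stA m)^T.

(* E = e A^q  and  E^sigma = sigma(e) A^q  (column vectors) *)
Definition in_E (xi : 'cV[A]_q) : Prop := e *m xi = xi.
Definition in_Esig (eta : 'cV[A]_q) : Prop := sigma_mx e *m eta = eta.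
Definition rmul (xi : 'cV[A]_q) (a : A) : 'cV[A]_q := map_mx (fun x => x * a) xi.
Definition sigmaE (xi : 'cV[A]_q) : 'cV[A]_q := map_mx sigma xi.
Definition h0 (xi eta : 'cV[A]_q) : A := \sum_j stA (xi j ord0) * eta j ord0.

Definition hermitian_metric (h : 'cV[A]_q -> 'cV[A]_q -> A) : Prop :=
  [/\ forall xi eta a b, in_E xi -> in_E eta ->
        h (rmul xi a) (rmul eta b) = stA a * h xi eta * b,
      forall xi1 xi2 eta, in_E xi1 -> in_E xi2 -> in_E eta ->
        h (xi1 + xi2) eta = h xi1 eta + h xi2 eta
        /\ h eta (xi1 + xi2) = h eta xi1 + h eta xi2,
      forall xi, in_E xi -> positive stB (pi (h xi xi))
    & forall xi, in_E xi -> (forall eta, in_E eta -> h xi eta = 0) -> xi = 0].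

Definition module_iso (s : 'cV[A]_q -> 'cV[A]_q) : Prop :=
  [/\ forall eta, in_Esig eta -> in_E (s eta),
      forall eta1 eta2, in_Esig eta1 -> in_Esig eta2 -> s (eta1 + eta2) = s eta1 + s eta2,
      forall eta a, in_Esig eta -> s (rmul eta a) = rmul (s eta) a,
      forall eta1 eta2, in_Esig eta1 -> in_Esig eta2 -> s eta1 = s eta2 -> eta1 = eta2
    & forall xi, in_E xi -> exists2 eta, in_Esig eta & s eta = xi].

Definition sigma_hermitian_structure (h : 'cV[A]_q -> 'cV[A]_q -> A)
    (s : 'cV[A]_q -> 'cV[A]_q) : Prop :=
  [/\ hermitian_metric h, module_iso s
    & forall xi1 xi2, in_E xi1 -> in_E xi2 ->
        h xi1 (s (sigmaE xi2)) = sigma (h (s (sigmaE xi1)) xi2)].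

(* E^sigma (x)_A Omega^1 is identified with sigma(e) Omega^1(A)^q, via
   eta (x) w |-> (eta_j w)_j *)
Definition in_tensor (v : 'cV[B]_q) : Prop :=
  map_mx pi (sigma_mx e) *m v = v /\ forall j, Omega1 (v j ord0).
Definition tens (eta : 'cV[A]_q) (w : B) : 'cV[B]_q := \col_j (pi (eta j ord0) * w).
Definition rmulB (v : 'cV[B]_q) (a : A) : 'cV[B]_q := map_mx (fun x => x * pi a) v.

Definition sigma_connection (nabla : 'cV[A]_q -> 'cV[B]_q) : Prop :=
  [/\ forall xi, in_E xi -> in_tensor (nabla xi),
      forall xi1 xi2, in_E xi1 -> in_E xi2 -> nabla (xi1 + xi2) = nabla xi1 + nabla xi2,
      forall (k : C) xi, in_E xi ->
        nabla (map_mx ( *:%R k) xi) = map_mx ( *:%R k) (nabla xi)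
    & forall xi a, in_E xi ->
        nabla (rmul xi a) = rmulB (nabla xi) a + tens (sigmaE xi) (d a)].

Definition represents (r : seq ('cV[A]_q * B)) (v : 'cV[B]_q) : Prop :=
  (forall p, p \in r -> in_Esig p.1 /\ Omega1 p.2) /\
  v = \sum_(p <- r) tens p.1 p.2.

Definition sigma_hermitian_connection (h : 'cV[A]_q -> 'cV[A]_q -> A)
    (s : 'cV[A]_q -> 'cV[A]_q) (nabla : 'cV[A]_q -> 'cV[B]_q) : Prop :=
  forall xi eta (rx ry : seq ('cV[A]_q * B)), in_E xi -> in_E eta ->
    represents rx (nabla xi) -> represents ry (nabla eta) ->
    \sum_(p <- ry) pi (h xi (s p.1)) * p.2
      - \sum_(p <- rx) stB p.2 * pi (h (s p.1) eta)
    = d (h (s (sigmaE xi)) eta).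

Definition grassmann_connection (xi : 'cV[A]_q) : 'cV[B]_q :=
  map_mx pi (sigma_mx e) *m map_mx d xi.

End TwistedSpectralTriple.

(* Main.v *)
Require Import Defs.
From HB Require Import structures.
From mathcomp Require Import all_boot all_order all_algebra.
Import GRing.Theory.
Local Open Scope ring_scope.

Theorem lemma6p2 (C : numClosedFieldType) (A B : algType C)
    (stA : A -> A) (stB : B -> B) (pi : A -> B)
    (sigma sigma_inv : A -> A) (d : A -> B)
    (q : nat) (e : 'M[A]_q)
    (h : 'cV[A]_q -> 'cV[A]_q -> A) (s : 'cV[A]_q -> 'cV[A]_q) :
  twisted_calculus stA stB pi sigma sigma_inv d ->
  e *m e = e ->
  sigma_mx sigma e = star_mx stA e ->
  hermitian_metric stA stB pi e h ->
  module_iso sigma e s ->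
  (forall eta xi, in_Esig sigma e eta -> in_E e xi -> h (s eta) xi = h0 stA eta xi) ->
  sigma_hermitian_structure stA stB pi sigma e h s /\
  sigma_connection pi sigma d e (grassmann_connection pi sigma d e) /\
  sigma_hermitian_connection stB pi sigma d e h s (grassmann_connection pi sigma d e).
Proof.
move=> tc ee se hm smi hs.
case: (tc) => [[stAK stAD stAM stAZ] [stBK stBD stBM stBZ] piinj pi1 piD piM piZ pistar
  sK siK s1 sD sM sZ sstar dD dZ dM dstar].
have z0 : forall (U V : zmodType) (g : U -> V), (forall x y, g (x + y) = g x + g y) -> g 0 = 0.
  by move=> U V g gD; apply: (@addrI _ (g 0)); rewrite -gD !addr0.
have pi0 := z0 _ _ _ piD; have st0 := z0 _ _ _ stAD; have stB0 := z0 _ _ _ stBD.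
have si0 := z0 _ _ _ sD; have d0 := z0 _ _ _ dD.
have piS : forall I (r : seq I) (P : pred I) (F : I -> A), pi (\sum_(i <- r | P i) F i) = \sum_(i <- r | P i) pi (F i).
  by move=> I r P F; exact: (big_morph _ piD pi0).
have stS : forall I (r : seq I) (P : pred I) (F : I -> A), stA (\sum_(i <- r | P i) F i) = \sum_(i <- r | P i) stA (F i).
  by move=> I r P F; exact: (big_morph _ stAD st0).
have stBS : forall I (r : seq I) (P : pred I) (F : I -> B), stB (\sum_(i <- r | P i) F i) = \sum_(i <- r | P i) stB (F i).
  by move=> I r P F; exact: (big_morph _ stBD stB0).
have siS : forall I (r : seq I) (P : pred I) (F : I -> A), sigma (\sum_(i <- r | P i) F i) = \sum_(i <- r | P i) sigma (F i).
  by move=> I r P F; exact: (big_morph _ sD si0).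
have dS : forall I (r : seq I) (P : pred I) (F : I -> A), d (\sum_(i <- r | P i) F i) = \sum_(i <- r | P i) d (F i).
  by move=> I r P F; exact: (big_morph _ dD d0).
have st1 : stA 1 = 1.
  by have := stAM 1 (stA 1); rewrite mul1r stAK mul1r.
have sst : forall a, sigma (stA (sigma a)) = stA a by move=> a; rewrite sstar siK.
have mulE : forall (R : pzRingType) m (M : 'M[R]_(m, q)) (v : 'cV[R]_q) j k,
   (M *m v) j k = \sum_l M j l * v l k by move=> *; rewrite mxE.
have eE : forall xi, in_E e xi -> forall j k, \sum_l e j l * xi l k = xi j k.
  by move=> xi exi j k; rewrite -mulE exi.
case: (hm) => hsesq hadd hpos hnd.
have inErmul : forall xi a, in_E e xi -> in_E e (rmul xi a).
  move=> xi a exi; rewrite /in_E -{2}exi; apply/matrixP => j k; rewrite !mxE mulr_suml.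
  by apply: eq_bigr => l _; rewrite !mxE mulrA.
have inEadd : forall x y, in_E e x -> in_E e y -> in_E e (x + y).
  by move=> x y ex ey; rewrite /in_E mulmxDr ex ey.
have rmul1 : forall xi : 'cV[A]_q, rmul xi 1 = xi.
  by move=> xi; apply/matrixP => j k; rewrite !mxE mulr1.
have sa : forall z, in_E e z -> stA (h z z) = h z z.
  move=> z ez; apply: piinj; rewrite pistar; case: (hpos z ez) => l ->.
  by rewrite stBS; apply: eq_bigr => c _; rewrite stBM stBK.
have key : forall x y, in_E e x -> in_E e y -> stA (h x y) + stA (h y x) = h x y + h y x.
  move=> x y ex ey; have := sa _ (inEadd _ _ ex ey).
  case: (hadd x y (x + y) ex ey (inEadd _ _ ex ey)) => -> _.
  case: (hadd x y x ex ey ex) => _ ->; case: (hadd x y y ex ey ey) => _ ->.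
  rewrite !stAD (sa x ex) (sa y ey).
  by rewrite -!addrA => /addrI; rewrite !addrA => /addIr.
have hsym : forall x y, in_E e x -> in_E e y -> h y x = stA (h x y).
  move=> x y ex ey.
  pose c : A := 'i *: 1.
  have exc := inErmul x c ex.
  have h1 : h (rmul x c) y = 'i^* *: h x y.
    by have := hsesq x y c 1 ex ey; rewrite rmul1 mulr1 stAZ st1 -scalerAl mul1r.
  have h2 : h y (rmul x c) = 'i *: h y x.
    by have := hsesq y x 1 c ey ex; rewrite rmul1 st1 mul1r -scalerAr mulr1.
  have E1 := key x y ex ey.
  have := key _ _ exc ey; rewrite h1 h2 !stAZ Num.Theory.conjCK Num.Theory.conjCi !scaleNr.
  move=> E2.
  have E3 : stA (h x y) - stA (h y x) = h y x - h x y.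
    apply: (can_inj (scalerK (Num.Theory.neq0Ci C))).
    by rewrite !scalerBr E2 addrC.
  have E4 : stA (h x y) *+ 2 = h y x *+ 2.
    by rewrite mulr2n -[LHS]addr0 -(subrr (stA (h y x))) addrACA E1 E3 (addrC (h x y)) addrACA subrr addr0 mulr2n.
  apply/esym; move: E4; rewrite -!scaler_nat => /(can_inj (scalerK _)); apply.
  by rewrite Num.Theory.pnatr_eq0.
case: (smi) => sE sadd srmul sinj ssurj.
have h0conj : forall a b : 'cV[A]_q, stA (h0 stA a b) = h0 stA b a.
  by move=> a b; rewrite /h0 stS; apply: eq_bigr => j _; rewrite stAM stAK.
have sigE : forall xi, in_E e xi -> in_Esig sigma e (sigmaE sigma xi).
  move=> xi exi; rewrite /in_Esig -{2}exi; apply/matrixP => j k; rewrite !mxE siS.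
  by apply: eq_bigr => l _; rewrite !mxE sM.
have hsr : forall eta xi, in_Esig sigma e eta -> in_E e xi -> h xi (s eta) = h0 stA xi eta.
  by move=> eta xi eeta exi; rewrite hsym ?hs ?h0conj //; exact: sE.
split.
  split => // x1 x2 e1 e2; rewrite hsr ?hs; try exact: sigE; rewrite // /h0 siS.
  by apply: eq_bigr => j _; rewrite !mxE sM sst.
have gcE : forall xi j k, grassmann_connection pi sigma d e xi j k
    = \sum_l pi (sigma (e j l)) * d (xi l k).
  by move=> xi j k; rewrite /grassmann_connection mxE; apply: eq_bigr => l _; rewrite !mxE.
have sMmx : forall M N : 'M[A]_q, sigma_mx sigma (M *m N) = sigma_mx sigma M *m sigma_mx sigma N.
  move=> M N; apply/matrixP => j k; rewrite !mxE siS; apply: eq_bigr => l _.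
  by rewrite !mxE sM.
have piMmx : forall M N : 'M[A]_q, map_mx pi (M *m N) = map_mx pi M *m map_mx pi N.
  move=> M N; apply/matrixP => j k; rewrite !mxE piS; apply: eq_bigr => l _.
  by rewrite !mxE piM.
have seE : forall j k, sigma (e j k) = stA (e k j).
  by move=> j k; have := congr1 (fun M : 'M[A]_q => M j k) se; rewrite /= !mxE.
split.
  split.
  - move=> xi exi; split.
      by rewrite /grassmann_connection mulmxA -piMmx -sMmx ee.
    move=> j; exists [seq (sigma (e j l), xi l ord0) | l <- index_enum 'I_q].
    by rewrite gcE big_map.
  - move=> x1 x2 _ _; apply/matrixP => j k.
    rewrite [in RHS]mxE !gcE -big_split /=; apply: eq_bigr => l _.
    by rewrite mxE dD mulrDr.
  - move=> k xi _; apply/matrixP => j c; rewrite [in RHS]mxE !gcE scaler_sumr.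
    by apply: eq_bigr => l _; rewrite mxE dZ scalerAr.
  - move=> xi a exi; apply/matrixP => j c; have -> : c = ord0 by apply: ord1.
    rewrite gcE [in RHS]mxE /rmulB /tens [X in X + _]mxE [X in _ + X]mxE gcE mxE.
    under eq_bigr do rewrite mxE dM mulrDr.
    rewrite big_split mulr_suml; congr (_ + _).
      by apply: eq_bigr => l _; rewrite mulrA.
    rewrite -(eE xi exi j ord0) siS piS mulr_suml; apply: eq_bigr => l _.
    by rewrite sM piM mulrA.
move=> xi eta rx ry exi eeta [rxE rxN] [ryE ryN].
have S1 : \sum_(p <- ry) pi (h xi (s p.1)) * p.2
    = \sum_k pi (stA (xi k ord0)) * d (eta k ord0).
  transitivity (\sum_(p <- ry) \sum_j pi (stA (xi j ord0)) * (pi (p.1 j ord0) * p.2)).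
    apply: eq_big_seq => p pin; rewrite (hsr _ _ (ryE p pin).1 exi) /h0 piS mulr_suml.
    by apply: eq_bigr => j _; rewrite piM mulrA.
  rewrite exchange_big /=.
  transitivity (\sum_j pi (stA (xi j ord0)) * grassmann_connection pi sigma d e eta j ord0).
    apply: eq_bigr => j _; rewrite ryN summxE mulr_sumr; apply: eq_bigr => p _.
    by rewrite mxE.
  rewrite (eq_bigr (fun j => \sum_k pi (stA (xi j ord0)) * (pi (sigma (e j k)) * d (eta k ord0)))); last by move=> j _; rewrite gcE mulr_sumr.
  rewrite exchange_big /=; apply: eq_bigr => k _.
  rewrite -(eE xi exi k ord0) stS piS mulr_suml; apply: eq_bigr => j _.
  by rewrite mulrA -piM stAM seE.
have S2 : \sum_(p <- rx) stB p.2 * pi (h (s p.1) eta)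
    = - \sum_k d (sigma_inv (stA (xi k ord0))) * pi (eta k ord0).
  transitivity (\sum_(p <- rx) \sum_j stB (pi (p.1 j ord0) * p.2) * pi (eta j ord0)).
    apply: eq_big_seq => p pin; rewrite (hs _ _ (rxE p pin).1 eeta) /h0 piS mulr_sumr.
    by apply: eq_bigr => j _; rewrite stBM -pistar piM mulrA.
  rewrite exchange_big /=.
  transitivity (\sum_j stB (grassmann_connection pi sigma d e xi j ord0) * pi (eta j ord0)).
    apply: eq_bigr => j _; rewrite rxN summxE stBS mulr_suml; apply: eq_bigr => p _.
    by rewrite mxE.
  rewrite (eq_bigr (fun j => \sum_k stB (pi (sigma (e j k)) * d (xi k ord0)) * pi (eta j ord0))); last by move=> j _; rewrite gcE stBS mulr_suml.
  rewrite exchange_big /= -sumrN; apply: eq_bigr => k _.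
  rewrite -(eE eta eeta k ord0) piS mulr_sumr -sumrN; apply: eq_bigr => j _.
  by rewrite stBM dstar -pistar seE stAK piM mulrA !mulNr.
rewrite S1 S2 opprK -big_split (hs _ _ (sigE _ exi) eeta) /h0 dS /=.
by apply: eq_bigr => k _; rewrite mxE dM sstar siK addrC.
Qed.
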